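(* Fix a context-free grammar $G=(N,\Sigma,P,S)$. Let $M=(V,E,L)$ be a finite directed edge-labeled graph with $L\subseteq\Sigma$, $E\subseteq V\times L\times V$, and no two parallel edges with the same label, and let $V_s,V_f\subseteq V$ be sets of start and final vertices. Then the worst-case running time of the GLL-based graph parsing algorithm (described in the context) run on $G$ and $M$ is $$O\left(|V|^3\cdot\max_{v\in V}\deg^+(v)\right),$$ where $\deg^+(v)$ is the out-degree of $v$ in $M$, the constants depending only on $G$.
   Context: Paths and queries: a path in $M$ is a sequence of edges $(v_0,l_0,v_1),(v_1,l_1,v_2),\dots,(v_{n-1},l_{n-1},v_n)$ with $n\ge 1$; its word is $l_0l_1\cdots l_{n-1}$. The algorithm builds a representation of all paths $p$ from a vertex of $V_s$ to a vertex of $V_f$ whose word belongs to $\mathcal{L}(G)$. The GLL-based graph parsing algorithm: it is the table-driven generalized LL (GLL) parsing algorithm in which input positions are vertices of $M$ instead of indices into a string. A grammar slot is a production with a dot, $X\to\alpha\cdot\beta$. The algorithm maintains a graph-structured stack (GSS) whose nodes are labeled by pairs (grammar slot, vertex); descriptors $(L,u,i,w)$ with $L$ a grammar slot, $u$ a GSS node, $i\in V$ the current position and $w$ an SPPF node (or a dummy); a working set $R$ of descriptors to process, a set $U$ of all descriptors ever created (a descriptor is added to $R$ only if it is not already in $U$), and a set $P$ of popped (GSS node, SPPF node) pairs. Initially $R$ contains one initial descriptor for each vertex in $V_s$. Processing a descriptor at slot $X\to\alpha\cdot x\beta$ at vertex $i$: if $x$ is a terminal, then for every outgoing edge $e$ of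 $i$ with label $x$, the terminal SPPF node for $e$ is created/reused, combined with the current SPPF node, and a descriptor with slot $X\to\alpha x\cdot\beta$ and position the target of $e$ is added; if $x$ is a nonterminal, a GSS node for $(X\to\alpha x\cdot\beta, i)$ is created/reused (with an edge to the current GSS node labeled by the current SPPF node), and for every slot in the union, over outgoing edges $e$ of $i$, of the LL parse-table entries for $x$ and the label of $e$, a descriptor at position $i$ is added; at a slot $X\to\alpha\cdot$ the standard GLL pop operation is performed. All other operations (add, pop, create, SPPF node construction) are those of standard GLL. The algorithm terminates when $R$ is empty. The output is a binarized Shared Packed Parse Forest (SPPF) with terminal nodes $(v_0,T,v_1)$ for edges $(v_0,T,v_1)\in E$, $\varepsilon$-nodes $(v,\varepsilon,v)$, nonterminal nodes $(v_0,A,v_1)$, intermediate nodes $(v_0,t,v_1)$ with $t$ a grammar slot, and packed nodes $(A\to\alpha\cdot\beta,v)$ (children of nonterminal/intermediate nodes, with at most two children), each node created at most once per label. *)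

(* Defs.v *)
From mathcomp Require Import all_boot.
Set Implicit Arguments.
Unset Strict Implicit.
Unset Printing Implicit Defensive.

Record grammar (N T : finType) := Grammar {
  prods : seq (N * seq (N + T));
  start : N }.

Section LL.
Variables (N T : finType) (G : grammar N T).

Definition sym := (N + T)%type.

Definition nullable_step (A : {set N}) : {set N} :=
  [set X | has (fun p : N * seq sym => (p.1 == X) &&
       all (fun s : sym => if s is inl Y then Y \in A else false) p.2) (prods G)].
Definition nullableN : {set N} := fixset nullable_step.
Definition nullable_seq (s : seq sym) : bool :=
  all (fun x : sym => if x is inl Y then Y \in nullableN else false) s.

(* a \in FIRST(s), relative to a FIRST table F for nonterminals *)
Fixpoint first_seq (F : {set N * T}) (s : seq sym) (a : T) : bool :=
  match s with
  | [::] => false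
  | inr b :: _ => b == a
  | inl Y :: s' => ((Y, a) \in F) || ((Y \in nullableN) && first_seq F s' a)
  end.

Definition first_step (F : {set N * T}) : {set N * T} :=
  [set xa : N * T | has (fun p : N * seq sym =>
      (p.1 == xa.1) && first_seq F p.2 xa.2) (prods G)].
Definition FIRST : {set N * T} := fixset first_step.

(* FOLLOW sets (no end-marker: lookahead symbols are edge labels) *)
Definition follow_step (Fo : {set N * T}) : {set N * T} :=
  [set xa : N * T | has (fun p : N * seq sym =>
     has (fun k => match drop k p.2 with
                   | inl Y :: beta => (Y == xa.1) &&
                       (first_seq FIRST beta xa.2 ||
                        (nullable_seq beta && ((p.1, xa.2) \in Fo)))
                   | _ => false end) (iota 0 (size p.2))) (prods G)].
Definition FOLLOW : {set N * T} := fixset follow_step.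

(* grammar slot X -> alpha . beta, represented as (X, alpha, beta) *)
Definition slot := (N * seq sym * seq sym)%type.

Definition ll_table (X : N) (a : T) : seq slot :=
  [seq ((p.1, [::], p.2) : slot) | p <- prods G &
     (p.1 == X) && (first_seq FIRST p.2 a ||
                    (nullable_seq p.2 && ((X, a) \in FOLLOW)))].
End LL.

Section GLL.
Variables (N T : finType) (G : grammar N T) (V : finType) (E : {set V * T * V}).

(* SPPF node labels: terminal, epsilon, nonterminal, intermediate (slot) *)
Definition label := (T + (unit + (N + slot N T)))%type.
(* SPPF node (left extent, label, right extent); None is the dummy node $ *)
Definition sppf := option (V * label * V).
(* GSS node (slot, vertex); None is the GSS root u0 *)
Definition gss := option (slot N T * V).
(* descriptor (L, u, i, w); L = None marks the initial descriptor *)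
Definition desc := (option (slot N T) * gss * V * sppf)%type.

Record state := State {
  R_ : seq desc;
  U_ : seq desc;                  (* all descriptors ever created *)
  P_ : seq (gss * sppf);          (* popped pairs *)
  GE_ : seq (gss * sppf * gss) }. (* GSS edges (source, label, target) *)

Definition out_edges (i : V) : seq (V * T * V) := [seq e <- enum E | e.1.1 == i].
Definition outdeg (i : V) : nat := size (out_edges i).

Definition dispatch (X : N) (i : V) : seq (slot N T) :=
  undup (flatten [seq ll_table G X e.1.2 | e <- out_edges i]).

Definition add (st : state) (d : desc) : state :=
  if d \in U_ st then st else State (d :: R_ st) (d :: U_ st) (P_ st) (GE_ st).
Definition add_all (st : state) (ds : seq desc) : state := foldl add st ds.

Definition getNodeP (L : slot N T) (w z : sppf) : sppf :=
  match z with
  | None => None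
  | Some (k, _, i) =>
    if (size L.1.2 == 1) && (L.2 != [::]) then z else
    let lab : label := if L.2 == [::] then inr (inr (inl L.1.1))
                       else inr (inr (inr L)) in
    match w with
    | None => Some (k, lab, i)
    | Some (j, _, _) => Some (j, lab, i)
    end
  end.

Definition rext (z : sppf) (d : V) : V := if z is Some (_, _, h) then h else d.

(* create: returns the GSS node, the new state and the elementary cost *)
Definition create (L : slot N T) (u : gss) (i : V) (w : sppf) (st : state)
  : gss * state * nat :=
  let v : gss := Some (L, i) in
  if (v, w, u) \in GE_ st then (v, st, 1) else
  let st1 := State (R_ st) (U_ st) (P_ st) ((v, w, u) :: GE_ st) in
  let zs := [seq pz.2 | pz <- P_ st & pz.1 == v] in
  (v, add_all st1 [seq ((Some L, u, rext z i, getNodeP L w z) : desc) | z <- zs],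
   1 + size zs).

Definition pop (u : gss) (i : V) (z : sppf) (st : state) : state * nat :=
  match u with
  | None => (st, 1)
  | Some (L, _) =>
    let st1 := if (u, z) \in P_ st then st
               else State (R_ st) (U_ st) ((u, z) :: P_ st) (GE_ st) in
    let es := [seq e <- GE_ st | e.1.1 == u] in
    (add_all st1 [seq ((Some L, e.2, i, getNodeP L e.1.2 z) : desc) | e <- es],
     1 + size es)
  end.

Definition process (d : desc) (st : state) : state * nat :=
  let '(ol, u, i, w) := d in
  match ol with
  | None =>
    let ls := dispatch (start G) i in
    (add_all st [seq ((Some L, u, i, None) : desc) | L <- ls], 1 + outdeg i + size ls)
  | Some L =>
    let '(X, alpha, beta) := L in
    match beta with
    | [::] =>
      if alpha is [::]
      then pop u i (getNodeP L w (Some (i, inr (inl tt), i))) st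
      else pop u i w st
    | inr a :: beta' =>
      let L' : slot N T := (X, rcons alpha (inr a), beta') in
      let es := [seq e <- out_edges i | e.1.2 == a] in
      (add_all st [seq ((Some L', u, e.2, getNodeP L' w (Some (i, inl a, e.2))) : desc)
                  | e <- es], 1 + outdeg i)
    | inl Y :: beta' =>
      let L' : slot N T := (X, rcons alpha (inl Y), beta') in
      let '(v, st1, c) := create L' u i w st in
      let ls := dispatch Y i in
      (add_all st1 [seq ((Some L0, v, i, None) : desc) | L0 <- ls], c + outdeg i + size ls)
    end
  end.

Definition init (Vs : {set V}) : state :=
  let ds := [seq ((None, None, v, None) : desc) | v <- enum Vs] in
  State ds ds [::] [::].

(* runs st st' c : from st the algorithm can reach st' (any choice of
   descriptor removed from R at each step) with total elementary cost c *)
Inductive runs : state -> state -> nat -> Prop :=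
| runs_refl st : runs st st 0
| runs_step st d st' c st'' c' :
    d \in R_ st ->
    process d (State (rem d (R_ st)) (U_ st) (P_ st) (GE_ st)) = (st', c) ->
    runs st' st'' c' -> runs st st'' (c + c').

End GLL.

(* Main.v *)
Require Import Defs.
From mathcomp Require Import all_boot zify.

Set Implicit Arguments.
Unset Strict Implicit.
Unset Printing Implicit Defensive.

Section Proof.
Variables (N T : finType) (G : grammar N T) (V : finType) (E : {set V * T * V}).

Notation slotT := (slot N T).
Notation descT := (desc N T V).
Notation stT := (state N T V).

Lemma add_allP (Q : descT -> Prop) (st : stT) ds :
 (forall d, d \in R_ st -> Q d) -> (forall d, d \in U_ st -> Q d) -> uniq (U_ st) ->
 (forall d, d \in ds -> Q d) ->
 (forall d, d \in R_ (add_all st ds) -> Q d) /\ (forall d, d \in U_ (add_all st ds) -> Q d) /\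
     uniq (U_ (add_all st ds)) /\ P_ (add_all st ds) = P_ st /\ GE_ (add_all st ds) = GE_ st /\
     size (U_ (add_all st ds)) + size (R_ st) = size (R_ (add_all st ds)) + size (U_ st).
Proof.
elim: ds st => [|x ds IH] st HR HU Hu Hds /=.
  by do ! split => //; rewrite addnC.
have Hds' : forall d, d \in ds -> Q d by move=> d Hd; apply: Hds; rewrite inE Hd orbT.
have Hx : Q x by apply: Hds; rewrite inE eqxx.
rewrite /add; case: ifP => Hin.
  exact: IH.
have [] := IH (State (x :: R_ st) (x :: U_ st) (P_ st) (GE_ st)) => //=.
- by move=> d; rewrite inE => /orP [/eqP -> //|]; apply: HR.
- by move=> d; rewrite inE => /orP [/eqP -> //|]; apply: HU.
- by rewrite Hin Hu.
move=> H1 [H2 [H3 [H4 [H5 H6]]]]; do ! split => //; by move: H6; rewrite /= !addnS => -[].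
Qed.


Definition validL (L : slotT) : bool := (L.1.1, L.1.2 ++ L.2) \in prods G.
Definition validlab (l : label N T) : bool :=
  match l with inr (inr (inr L)) => validL L | _ => true end.

Definition SL : seq slotT :=
  flatten [seq [seq ((p.1, take k p.2, drop k p.2) : slotT) | k <- iota 0 (size p.2).+1] | p <- prods G].

Lemma validL_SL L : validL L -> L \in SL.
Proof.
case: L => [[X alpha] beta] /= H; apply/flattenP.
exists [seq ((X, take k (alpha ++ beta), drop k (alpha ++ beta)) : slotT) | k <- iota 0 (size (alpha ++ beta)).+1].
  by apply/mapP; exists (X, alpha ++ beta).
apply/mapP; exists (size alpha).
  by rewrite mem_iota /= size_cat; lia.
by rewrite take_size_cat // drop_size_cat.
Qed.

Definition LAB : seq (label N T) :=
  [seq inl a | a <- enum T] ++ inr (inl tt) :: [seq inr (inr (inl X)) | X <- enum N]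
  ++ [seq inr (inr (inr L)) | L <- SL].

Lemma validlab_LAB l : validlab l -> l \in LAB.
Proof.
rewrite /LAB !(mem_cat, inE).
case: l => [a|[[]|[X|L]]] /= H.
- by rewrite map_f ?mem_enum.
- by rewrite ?eqxx ?orbT.
- by rewrite map_f ?mem_enum ?orbT.
- by rewrite map_f ?orbT // validL_SL.
Qed.

Definition condN (L : slotT) := (size L.1.2 == 1) && (L.2 != [::]).

Lemma getNodeP_some (L : slotT) (w : sppf N T V) k0 l0 h :
  exists k l, getNodeP L w (Some (k0, l0, h)) = Some (k, l, h) /\
   (validL L -> validlab l0 -> validlab l) /\
   k = (if condN L then k0 else if w is Some (j, _, _) then j else k0).
Proof.
rewrite /getNodeP /condN; case: ifP => Hc.
  by exists k0, l0.
case: w => [[[j x] y]|].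
  by case: ifP => _; do 2 eexists; (split; first reflexivity); split => //=.
by case: ifP => _; do 2 eexists; (split; first reflexivity); split => //=.
Qed.


Notation gssT := (gss N T V).
Notation sppfT := (sppf N T V).

Definition gssv (u : gssT) : bool := if u is Some (L, _) then validL L else true.

Definition sOK (u : gssT) (i : V) (w : sppfT) : Prop :=
  (w = None -> forall L0 j, u = Some (L0, j) -> j = i) /\
  (forall k l h, w = Some (k, l, h) -> validlab l /\ h = i /\ forall L0 j, u = Some (L0, j) -> k = j).

Definition descOK (d : descT) : Prop :=
  match d with
  | (None, u, i, w) => u = None /\ w = None
  | (Some L, u, i, w) => validL L /\ gssv u /\ (w = None <-> L.1.2 = [::]) /\ sOK u i w
  end.

Definition edgeOK (e : gssT * sppfT * gssT) : Prop :=
  match e with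
  | (Some (L, i), w, u) => validL L /\ L.1.2 != [::] /\ gssv u /\ sOK u i w /\ (size L.1.2 = 1 -> w = None)
  | _ => False
  end.

Definition pOK (p : gssT * sppfT) : Prop :=
  match p with
  | (Some (_, j), Some (k, l, _)) => k = j /\ validlab l
  | _ => False
  end.

Definition Inv (st : stT) : Prop :=
  (forall d, d \in R_ st -> descOK d) /\ (forall d, d \in U_ st -> descOK d) /\ uniq (U_ st) /\
  (forall e, e \in GE_ st -> edgeOK e) /\ uniq (GE_ st) /\
  (forall p, p \in P_ st -> pOK p) /\ uniq (P_ st).

Lemma add_all_Inv st ds : Inv st -> (forall x, x \in ds -> descOK x) ->
  Inv (add_all st ds) /\
  size (U_ (add_all st ds)) + size (R_ st) = size (R_ (add_all st ds)) + size (U_ st).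
Proof.
move=> [HR [HU [Hu [HG [HGu [HP HPu]]]]]] Hds.
have [H1 [H2 [H3 [H4 [H5 H6]]]]] := add_allP HR HU Hu Hds.
by do !split => //; rewrite ?H4 ?H5.
Qed.

Lemma lext_ok u i w L0 j : sOK u i w -> u = Some (L0, j) ->
  (if w is Some (j', _, _) then j' else i) = j.
Proof.
move=> [H1 H2] Hu; case: w H1 H2 => [[[k l] h]|] H1 H2.
  by have [_ [_ H3]] := H2 k l h erefl; exact: H3 Hu.
by rewrite (H1 erefl L0 j Hu).
Qed.

Lemma size1_nil (A : Type) (alpha : seq A) x : size (rcons alpha x) = 1 -> alpha = [::].
Proof. by rewrite size_rcons; case: alpha. Qed.

Lemma new_desc_ok X alpha x beta' u i w l0 h :
 descOK (Some (X, alpha, x :: beta'), u, i, w) -> validlab l0 ->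
 descOK (Some ((X, rcons alpha x, beta') : slotT), u, h,
         getNodeP (X, rcons alpha x, beta') w (Some (i, l0, h))).
Proof.
move=> [HL [Hu [Hiff HS]]] Hl0.
have [k [l [-> [Hl Hk]]]] := getNodeP_some (X, rcons alpha x, beta') w i l0 h.
have HL' : validL (X, rcons alpha x, beta') by rewrite /validL /= cat_rcons.
split => //; split => //; split.
  by split => // H; move: (congr1 size H); rewrite size_rcons.
split => // k' l' h' [<- <- <-]; split; first exact: Hl.
split => // L0 j Huj; rewrite Hk.
have Hj := lext_ok HS Huj.
case: ifP => Hc.
  move: Hc; rewrite /condN /= => /andP [/eqP Ha _].
  have {}Ha := size1_nil Ha.
  by move: Hj; rewrite (proj2 Hiff Ha).
exact: Hj.
Qed.

Lemma dispatch_ok Y i L : L \in dispatch G E Y i -> validL L /\ L.1.2 = [::].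
Proof.
rewrite /dispatch mem_undup => /flattenP [s /mapP [e _ ->]] /mapP [p].
rewrite mem_filter => /andP [_ Hp] ->; split => //.
by rewrite /validL /=; case: p Hp.
Qed.

Lemma dispatch_size Y i : size (dispatch G E Y i) <= size SL.
Proof.
apply: uniq_leq_size; first exact: undup_uniq.
by move=> L /dispatch_ok [/validL_SL].
Qed.


Definition SLV : seq (slotT * V) := [seq (L, j) | L <- SL, j <- enum V].
Definition GS : seq gssT := None :: [seq Some x | x <- SLV].
Definition KL : seq (V * label N T) := [seq (k, lb) | k <- enum V, lb <- LAB].
Definition EDG (j : V) : seq (sppfT * gssT) :=
  [seq (None, u') | u' <- GS] ++ [seq (Some (kl.1, kl.2, j), None) | kl <- KL] ++
  [seq (Some (x.2, lb, j), Some x) | x <- SLV, lb <- LAB].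
Definition ZS (i : V) : seq sppfT := [seq Some (i, lb, h) | lb <- LAB, h <- enum V].

Lemma mem_SLV L j : validL L -> (L, j) \in SLV.
Proof. by move=> HL; apply/allpairsP; exists (L, j); rewrite mem_enum validL_SL. Qed.

Lemma mem_KL k lb : validlab lb -> (k, lb) \in KL.
Proof. by move=> Hl; apply/allpairsP; exists (k, lb); rewrite mem_enum validlab_LAB. Qed.

Lemma size_EDG j : size (EDG j) = (1 + size SL * #|V|) + #|V| * size LAB + size SL * #|V| * size LAB.
Proof.
have H1 : size SLV = size SL * #|V| by rewrite /SLV size_allpairs -cardE.
rewrite /EDG /KL /GS; move: SLV H1 => slv H1; generalize LAB => lab.
by rewrite !size_cat !size_map !size_allpairs /= size_map H1 -cardE add1n !addnA addSn.
Qed.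

Lemma size_ZS i : size (ZS i) = size LAB * #|V|.
Proof. by rewrite /ZS size_allpairs -cardE. Qed.

Lemma edges_size (GE : seq (gssT * sppfT * gssT)) L j : uniq GE -> (forall e, e \in GE -> edgeOK e) ->
  size [seq e <- GE | e.1.1 == Some (L, j)] <= size (EDG j).
Proof.
move=> Hu Hok; rewrite -(size_map (fun e => (e.1.2, e.2))); apply: uniq_leq_size.
  rewrite map_inj_in_uniq ?filter_uniq //.
  move=> [[a b] c] [[a' b'] c']; rewrite !mem_filter /= => /andP [/eqP -> _] /andP [/eqP -> _].
  by case=> -> ->.
move=> p /mapP [[[a w'] u']]; rewrite mem_filter /= => /andP [/eqP Ha He] ->.
have := Hok _ He; rewrite Ha /= => -[HL [_ [Hg [[H1 H2] _]]]]; clear He.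
rewrite /EDG !mem_cat; case: w' H1 H2 => [[[k lb] h]|] H1 H2.
  have [Hlb [-> Hk]] := H2 k lb h erefl.
  case: u' Hg Hk {H1 H2} => [[L0 j0]|] Hg Hk.
    rewrite (Hk L0 j0 erefl); apply/orP; right; apply/orP; right.
    by apply/allpairsP; exists ((L0, j0), lb); rewrite mem_SLV // validlab_LAB.
  apply/orP; right; apply/orP; left; apply/mapP; exists (k, lb) => //.
  exact: mem_KL.
apply/orP; left; apply/mapP; exists u' => //.
case: u' Hg {H1 H2} => [[L0 j0]|] Hg; rewrite /GS inE //=.
by rewrite map_f ?orbT // mem_SLV.
Qed.

Lemma zs_size (P : seq (gssT * sppfT)) L i : uniq P -> (forall p, p \in P -> pOK p) ->
  size [seq pz.2 | pz <- P & pz.1 == Some (L, i)] <= size LAB * #|V|.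
Proof.
move=> Hu Hok; rewrite -(size_ZS i); apply: uniq_leq_size.
  rewrite map_inj_in_uniq ?filter_uniq //.
  move=> [a b] [a' b']; rewrite !mem_filter /= => /andP [/eqP -> _] /andP [/eqP -> _].
  by move=> ->.
move=> z /mapP [[a b]]; rewrite mem_filter /= => /andP [/eqP Ha He] ->.
have := Hok _ He; rewrite Ha /=; case: b {He} => [[[k lb] h]|] //= [-> Hl].
by apply/allpairsP; exists (lb, h); rewrite mem_enum validlab_LAB.
Qed.


Local Arguments getNodeP : simpl never.

Definition Dm := \max_(v : V) outdeg E v.
Definition Kstep := 2 + Dm + size SL + (2 * size LAB + size SL + size SL * size LAB) * #|V|.

Lemma outdeg_le i : outdeg E i <= Dm.
Proof. exact: (@leq_bigmax V (fun v => outdeg E v) i). Qed.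

Lemma pop_ok st u i z st' c :
  (exists k l, z = Some (k, l, i) /\ validlab l /\ forall L0 j, u = Some (L0, j) -> k = j) ->
  Inv st -> pop u i z st = (st', c) ->
  Inv st' /\ size (U_ st') + size (R_ st) = size (R_ st') + size (U_ st) /\ c <= Kstep.
Proof.
case: u => [[L j]|] [k [l [-> [Hl Hk]]]] HI /=; last first.
  by case=> <- <-; split => //; split; [rewrite addnC | rewrite /Kstep].
have {Hk}Hk := Hk L j erefl; subst k.
set st1 := (if _ \in P_ st then _ else _).
have [HI1 [E1 [E2 E3]]] : Inv st1 /\ R_ st1 = R_ st /\ U_ st1 = U_ st /\ GE_ st1 = GE_ st.
  rewrite /st1; case: ifP => Hin //.
  case: HI => [HR [HU [Hu [HG [HGu [HP HPu]]]]]].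
  do !split => //=; last by rewrite Hin HPu.
  by move=> p; rewrite inE => /orP [/eqP -> //|]; apply: HP.
case=> <- <-.
have Hds : forall x, x \in [seq ((Some L, e.2, i, getNodeP L e.1.2 (Some (j, l, i))) : descT)
                        | e <- [seq e <- GE_ st | e.1.1 == Some (L, j)]] -> descOK x.
  move=> x /mapP [[[a w'] u']]; rewrite mem_filter /= => /andP [/eqP Ha He] -> /=.
  have := proj1 (proj2 (proj2 (proj2 HI))) _ He; rewrite Ha /=.
  move=> [HL [HLn [Hg [HS Hs1]]]].
  have [k' [l' [-> [Hl' Hk']]]] := getNodeP_some L w' j l i.
  split => //; split => //; split.
    by split => // H; move: HLn; rewrite H.
  split => // k1 l1 h1 [<- <- <-]; split; first exact: Hl'.
  split => // L0 j0 Hu'; rewrite Hk'.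
  case: ifP => Hc.
    move: Hc; rewrite /condN => /andP [/eqP Hsz _].
    by case: HS => H1 _; rewrite (H1 (Hs1 Hsz) L0 j0 Hu').
  exact: lext_ok HS Hu'.
have [HI' Hs] := add_all_Inv HI1 Hds.
split => //; split; first by rewrite -E1 -E2.
have := edges_size L j (proj1 (proj2 (proj2 (proj2 (proj2 HI))))) (proj1 (proj2 (proj2 (proj2 HI)))).
rewrite size_EDG /Kstep; move: (size _) (size SL) (size LAB) #|V| Dm => a b c0 n d; nia.
Qed.


Lemma create_ok st X alpha Y beta' u i w :
  Inv st -> descOK (Some (X, alpha, inl Y :: beta'), u, i, w) ->
  exists st1 c1, create ((X, rcons alpha (inl Y), beta') : slotT) u i w st
     = (Some ((X, rcons alpha (inl Y), beta'), i), st1, c1) /\ Inv st1 /\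
    size (U_ st1) + size (R_ st) = size (R_ st1) + size (U_ st) /\ c1 <= 1 + size LAB * #|V|.
Proof.
move=> HI Hd; rewrite /create /=; case: ifP => Hin.
  exists st, 1; split => //; split => //; split; [by rewrite addnC | by rewrite leq_addr].
have HI1 : Inv (State (R_ st) (U_ st) (P_ st)
                 ((Some ((X, rcons alpha (inl Y), beta') : slotT, i), w, u) :: GE_ st)).
  case: HI => [HR [HU [Hu [HG [HGu [HP HPu]]]]]].
  do !split => //=; last by rewrite Hin HGu.
  move=> e; rewrite inE => /orP [/eqP -> /=|]; last exact: HG.
  case: Hd => [HL [Hg [Hiff HS]]].
  split; first by rewrite /validL /= cat_rcons.
  split; first by case: (alpha).
  do 2 split => //.
  by move=> Hs1; apply/Hiff; apply: size1_nil Hs1.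
have Hds : forall x, x \in [seq ((Some ((X, rcons alpha (inl Y), beta') : slotT), u, rext z i,
      getNodeP ((X, rcons alpha (inl Y), beta') : slotT) w z) : descT)
      | z <- [seq pz.2 | pz <- P_ st & pz.1 == Some ((X, rcons alpha (inl Y), beta') : slotT, i)]]
      -> descOK x.
  move=> x /mapP [z /mapP [[a b]]]; rewrite mem_filter /= => /andP [/eqP Ha Hp] -> ->.
  have := proj1 (proj2 (proj2 (proj2 (proj2 (proj2 HI))))) _ Hp; rewrite Ha.
  case: b {Hp} => [[[k lb] h]|] //= [-> Hl].
  exact: new_desc_ok Hd Hl.
have [HI' Hs] := add_all_Inv HI1 Hds.
eexists; eexists; split; first reflexivity.
split => //; split => //.
rewrite leq_add2l; apply: zs_size.
  exact: (proj2 (proj2 (proj2 (proj2 (proj2 (proj2 HI)))))).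
exact: (proj1 (proj2 (proj2 (proj2 (proj2 (proj2 HI)))))).
Qed.


Lemma step0 st d st' c : Inv st -> descOK d -> process G E d st = (st', c) ->
  Inv st' /\ size (U_ st') + size (R_ st) = size (R_ st') + size (U_ st) /\ c <= Kstep.
Proof.
move=> HI; case: d => [[[ol u] i] w]; case: ol => [[[X alpha] beta]|] Hd; last first.
  case: Hd => -> -> /=; case=> <- <-.
  have Hds : forall x, x \in [seq ((Some L, None, i, None) : descT) | L <- dispatch G E (start G) i]
                 -> descOK x.
    move=> x /mapP [L /dispatch_ok [HL Ha] ->] /=.
    do !split => //; by rewrite Ha.
  have [HI' Hs] := add_all_Inv HI Hds.
  split => //; split => //.
  have := outdeg_le i; have := dispatch_size (start G) i; rewrite /Kstep.
  move: (size _) (size SL) (size LAB) #|V| Dm (outdeg E i) => a b c0 n d o; nia.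
case: beta Hd => [|[Y|a] beta'] Hd.
-
  rewrite /process.
  case: alpha Hd => [|a0 alpha'] Hd; apply: pop_ok => //.
    case: Hd => [HL [Hg [Hiff HS]]].
    have Hw : w = None by apply/Hiff.
    have [k [l [-> [Hl Hk]]]] := getNodeP_some (X, [::], [::]) w i (inr (inl tt)) i.
    exists k, l; split => //; split; first by apply: Hl.
    move=> L0 j Hu; rewrite Hk /condN /=.
    exact: lext_ok HS Hu.
  case: Hd => [HL [Hg [Hiff [H1 H2]]]].
  case: w Hiff H1 H2 => [[[k l] h]|] Hiff H1 H2; last by have := proj1 Hiff erefl.
  have [Hl [-> Hk]] := H2 k l h erefl.
  by exists k, l.
-
  have [st1 [c1 [Hc [HI1 [Hs1 Hc1]]]]] := create_ok HI Hd.
  rewrite /process Hc; case=> <- <-.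
  have Hds : forall x, x \in [seq ((Some L0, Some ((X, rcons alpha (inl Y), beta') : slotT, i), i, None) : descT)
                 | L0 <- dispatch G E Y i] -> descOK x.
    move=> x /mapP [L /dispatch_ok [HL Ha] ->] /=.
    case: Hd => [HL' _].
    split => //; split; first by rewrite /validL /= cat_rcons.
    split; first by rewrite Ha.
    by split; [move=> _ L0 j [_ ->] | ].
  have [HI' Hs] := add_all_Inv HI1 Hds.
  split => //; split; first by move: Hs Hs1; move: (size _) (size _) (size _) (size _) (size _) (size _) => ? ? ? ? ? ?; lia.
  have := outdeg_le i; have := dispatch_size Y i; move: Hc1; rewrite /Kstep; clear Hc.
  move: (size (dispatch _ _ _ _)) (size SL) (size LAB) #|V| Dm (outdeg E i) c1 => a b c0 n d o c2; nia.
-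
  rewrite /process; case=> <- <-.
  have Hds : forall x, x \in [seq ((Some ((X, rcons alpha (inr a), beta') : slotT), u, e.2,
        getNodeP ((X, rcons alpha (inr a), beta') : slotT) w (Some (i, inl a, e.2))) : descT)
        | e <- [seq e <- out_edges E i | e.1.2 == a]] -> descOK x.
    move=> x /mapP [e _ ->].
    exact: new_desc_ok Hd _.
  have [HI' Hs] := add_all_Inv HI Hds.
  split => //; split => //.
  have := outdeg_le i; rewrite /Kstep.
  move: (size SL) (size LAB) #|V| Dm (outdeg E i) => b c0 n d o; nia.
Qed.


Lemma step st d st' c : Inv st -> d \in R_ st ->
  process G E d (State (rem d (R_ st)) (U_ st) (P_ st) (GE_ st)) = (st', c) ->
  Inv st' /\ size (U_ st') + size (R_ st) = (size (R_ st') + size (U_ st)).+1 /\ c <= Kstep.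
Proof.
move=> HI Hd Hp.
have HI0 : Inv (State (rem d (R_ st)) (U_ st) (P_ st) (GE_ st)).
  case: HI => [HR [HU [Hu [HG [HGu [HP HPu]]]]]].
  do !split => //= x Hx; apply: HR; exact: mem_rem Hx.
have [HI' [Hs Hc]] := step0 HI0 (proj1 HI d Hd) Hp.
split => //; split => //.
move: Hs; rewrite /= size_rem //.
have : 0 < size (R_ st) by case: (R_ st) Hd.
move: (size (R_ st)) (size (U_ st')) (size (R_ st')) (size (U_ st)) => a b c0 e; lia.
Qed.

Lemma runs_bound st st'' c : runs G E st st'' c -> Inv st ->
  Inv st'' /\ c + Kstep * (size (U_ st) + size (R_ st'')) <= Kstep * (size (U_ st'') + size (R_ st)).
Proof.
elim => [st0 | st0 d st' c0 st1 c' Hd Hp Hr IH] HI.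
  by split => //; rewrite add0n addnC.
have [HI' [Hs Hc]] := step HI Hd Hp.
have [HI'' Hb] := IH HI'.
split => //.
move: Hs Hc Hb; move: (size (U_ st0)) (size (R_ st0)) (size (U_ st')) (size (R_ st'))
  (size (U_ st1)) (size (R_ st1)) Kstep => a b e f g h K; nia.
Qed.

Definition OL : seq (option slotT) := None :: [seq Some L | L <- SL].
Definition IW0 : seq (V * sppfT) :=
  [seq (i, None) | i <- enum V] ++ [seq (i, Some (kl.1, kl.2, i)) | i <- enum V, kl <- KL].
Definition D0 : seq descT := [seq (o, None, iw.1, iw.2) | o <- OL, iw <- IW0].
Definition X1 : seq (slotT * V * V) := [seq (x, i) | x <- SLV, i <- enum V].
Definition Y1 : seq (slotT * V * V * option (label N T)) :=
  [seq (x, ol) | x <- X1, ol <- None :: [seq Some lb | lb <- LAB]].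
Definition D1 : seq descT :=
  [seq (o, Some p.1.1, p.1.2, omap (fun lb => (p.1.1.2, lb, p.1.2)) p.2) | o <- OL, p <- Y1].

Lemma mem_D d : descOK d -> d \in D0 ++ D1.
Proof.
case: d => [[[ol u] i] w]; rewrite mem_cat; case: ol => [L|].
  move=> [HL [Hg [Hiff [H1 H2]]]].
  have HOL : Some L \in OL by rewrite /OL inE map_f ?orbT ?validL_SL.
  case: u Hg H1 H2 => [[L0 j]|] Hg H1 H2.
    apply/orP; right; apply/allpairsP.
    case: w Hiff H1 H2 => [[[k lb] h]|] Hiff H1 H2.
      have [Hlb [-> Hk]] := H2 k lb h erefl; rewrite (Hk L0 j erefl).
      exists (Some L, (((L0, j), i), Some lb)); split => //.
      apply/allpairsP; exists (((L0, j), i), Some lb); split => //.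
        by apply/allpairsP; exists ((L0, j), i); rewrite mem_enum mem_SLV.
      by rewrite /= inE map_f ?orbT ?validlab_LAB.
    exists (Some L, (((L0, j), i), None)); split => //.
    apply/allpairsP; exists (((L0, j), i), None); split => //.
    by apply/allpairsP; exists ((L0, j), i); rewrite mem_enum mem_SLV.
  apply/orP; left; apply/allpairsP.
  case: w Hiff H1 H2 => [[[k lb] h]|] Hiff H1 H2.
    have [Hlb [-> Hk]] := H2 k lb h erefl.
    exists (Some L, (i, Some (k, lb, i))); split => //.
    rewrite /= /IW0 mem_cat; apply/orP; right; apply/allpairsP; exists (i, (k, lb)).
    by rewrite mem_enum mem_KL.
  exists (Some L, (i, None)); split => //.
  by rewrite /= /IW0 mem_cat map_f ?mem_enum.
case=> -> ->; apply/orP; left; apply/allpairsP; exists (None, (i, None)); split => //.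
by rewrite /= /IW0 mem_cat map_f ?mem_enum.
Qed.

Definition K2 := (1 + size SL) * (1 + size LAB) + (1 + size SL) * size SL * (1 + size LAB).

Lemma U_bound st : Inv st -> size (U_ st) <= K2 * (#|V| * #|V|).
Proof.
move=> [_ [HU [Hu _]]].
apply: leq_trans (uniq_leq_size Hu (fun d Hd => mem_D (HU d Hd))) _.
have H1 : size SLV = size SL * #|V| by rewrite /SLV size_allpairs -cardE.
have H2 : size KL = #|V| * size LAB by rewrite /KL size_allpairs -cardE.
have HO : size OL = 1 + size SL by rewrite /OL /= size_map.
have HX : size X1 = size SL * #|V| * #|V| by rewrite /X1 size_allpairs H1 -cardE.
have HY : size Y1 = size SL * #|V| * #|V| * (1 + size LAB).
  by rewrite /Y1 size_allpairs HX /= size_map.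
have HI : size IW0 = #|V| + #|V| * (#|V| * size LAB).
  by rewrite /IW0 size_cat size_map size_allpairs H2 -cardE.
have HD0 : size D0 = (1 + size SL) * (#|V| + #|V| * (#|V| * size LAB)).
  by rewrite /D0 size_allpairs HO HI.
have HD1 : size D1 = (1 + size SL) * (size SL * #|V| * #|V| * (1 + size LAB)).
  by rewrite /D1 size_allpairs HO HY.
rewrite size_cat HD0 HD1 /K2.
move: (size SL) (size LAB) #|V| => s l n.
have Hn : n <= n * n by case: n => [|n] //; rewrite mulSn leq_addr.
nia.
Qed.

End Proof.

Lemma Inv_init (N T : finType) (G : grammar N T) (V : finType) (Vs : {set V}) :
  Inv G (init N T Vs).
Proof.
have Hd : forall d, d \in [seq ((None, None, v, None) : desc N T V) | v <- enum Vs] -> descOK G d.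
  by move=> d /mapP [v _ ->].
do !split => //=.
rewrite map_inj_uniq ?enum_uniq //.
by move=> x y [].
Qed.

Theorem theorem4 (N T : finType) (G : grammar N T) :
  exists C : nat,
    forall (V : finType) (E : {set V * T * V}) (Vs Vf : {set V})
           (st : state N T V) (c : nat),
      runs G E (init N T Vs) st c ->
      c <= C * #|V| ^ 3 * maxn 1 (\max_(v : V) outdeg E v).
Proof.
exists (3 * (2 + size (SL G) + (2 * size (LAB G) + size (SL G) + size (SL G) * size (LAB G))) * K2 G).
move=> V E Vs Vf st c Hr.
have [HI Hb] := runs_bound Hr (Inv_init G Vs).
have HU := U_bound HI.
have HDm : Dm E = \max_(v : V) outdeg E v by [].
rewrite -HDm.
move: Hb; rewrite /Kstep /init /=.
move: (size [seq _ | v <- enum Vs]) (size (R_ st)) (size (U_ st)) HU => a r u HU.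
move: (size (SL G)) (size (LAB G)) (K2 G) (Dm E) #|V| HU => s l k d n HU.
case: n HU => [|n] HU.
  have Hu0 : u = 0 by apply/eqP; rewrite -leqn0; apply: leq_trans HU _; rewrite !muln0.
  subst u; rewrite add0n.
  set K := (2 + d + s + _); move=> H.
  have H' : c + K * a <= 0 + K * a.
    apply: leq_trans H; rewrite leq_add2l leq_mul2l leq_addr orbT //.
  by move: H'; rewrite leq_add2r leqn0 => /eqP ->.
have Hm1 : 1 <= maxn 1 d by rewrite leq_max.
have Hm2 : d <= maxn 1 d by rewrite leq_max leqnn orbT.
move: (maxn 1 d) Hm1 Hm2 => m Hm1 Hm2.
rewrite expnS.
set K := (2 + d + s + _); set K1 := (2 + s + _); move=> H.
have H1 : c <= K * u.
  rewrite -(leq_add2r (K * a)) -mulnDr; apply: leq_trans H; rewrite leq_add2l leq_mul2l leq_addr orbT //.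
have H3 : K <= 3 * K1 * n.+1 * m.
  rewrite /K /K1; move: (2 * l + s + s * l) => A; move: n.+1 (ltn0Sn n) => n1 Hn1.
  set B := 2 + s + A.
  have HB : 0 < B by rewrite /B; lia.
  have e1 : 2 + s <= B * n1 * m.
    apply: leq_trans (leq_addr A _) _; rewrite -/B -mulnA leq_pmulr // muln_gt0 Hn1 Hm1 //.
  have e2 : d <= B * n1 * m.
    apply: leq_trans Hm2 _; rewrite mulnC leq_pmulr // muln_gt0 HB Hn1 //.
  have e3 : A * n1 <= B * n1 * m.
    apply: leq_trans (leq_pmulr _ Hm1) _; rewrite leq_mul2r leq_mul2r (leq_addl (2 + s)) !orbT //.
  rewrite -!mulnA in e1 e2 e3 *; move: (B * (n1 * m)) e1 e2 e3 => X e1 e2 e3; lia.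
apply: leq_trans H1 _; apply: leq_trans (leq_mul H3 HU) _.
rewrite -!mulnA leq_pmul2l //.
apply: eq_leq; congr (_ * _); move: n.+1 => x; lia.
Qed.
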